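(* Let $s\ge 1$, $r\ge 1$, let $n_1,\ldots,n_r\ge 1$ be integers, and let $\sigma_1,\ldots,\sigma_r$ be semi-characters each of which is a finite product (possibly empty, giving the trivial semi-character $\boldsymbol{1}$) of the maps $\chi_{t_1},\ldots,\chi_{t_s}$. Then the multiple zeta value $$\zeta_C\begin{pmatrix}\sigma_1&\cdots&\sigma_r\\ n_1&\cdots&n_r\end{pmatrix}$$ belongs to the Tate algebra $\mathbb{T}_s$, and the function it defines on $\{(z_1,\ldots,z_s)\in\mathbb{C}_\infty^s:|z_i|\le 1\}$ extends to an entire function $\mathbb{C}_\infty^s\to\mathbb{C}_\infty$ (i.e. it is given by a power series in $t_1,\ldots,t_s$ with coefficients in $\mathbb{C}_\infty$ converging on all of $\mathbb{C}_\infty^s$).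
   Context: $q$ is a power of a prime $p$, $A=\mathbb{F}_q[\theta]$, $K=\mathbb{F}_q(\theta)$, $K_\infty=\mathbb{F}_q((1/\theta))$, $\mathbb{C}_\infty$ the completion of an algebraic closure of $K_\infty$ with absolute value $|\cdot|$ normalized by $|\theta|=q$. $A^+$ is the set of monic polynomials of $A$ and $A^+(d)$ those of degree $d$. $t_1,\ldots,t_s$ are indeterminates; for $a\in A$, $a(t_i)$ denotes the polynomial obtained by replacing $\theta$ by $t_i$, and $\chi_{t_i}:A^+\to\mathbb{F}_q[t_1,\ldots,t_s]$, $a\mapsto a(t_i)$. A semi-character is a multiplicative monoid map from $A^+$; products of semi-characters are taken pointwise. $\mathbb{T}_s$ is the Tate algebra: formal power series in $t_1,\ldots,t_s$ with coefficients in $\mathbb{C}_\infty$ tending to $0$, with the Gauss norm. For a semi-character $\sigma$ and integers $n,d\ge0$, $S_d(n;\sigma)=\sum_{a\in A^+(d)}a^{-n}\sigma(a)$, and $$S_d\begin{pmatrix}\sigma_1&\cdots&\sigma_r\\ n_1&\cdots&n_r\end{pmatrix}=S_d(n_1;\sigma_1)\sum_{d>i_2>\cdots>i_r\ge0}S_{i_2}(n_2;\sigma_2)\cdots S_{i_r}(n_r;\sigma_r),$$ $$\zeta_C\begin{pmatrix}\sigma_1&\cdots&\sigma_r\\ n_1&\cdots&n_r\end{pmatrix}=\sum_{d\ge0}S_d\begin{pmatrix}\sigma_1&\cdots&\sigma_r\\ n_1&\cdots&n_r\end{pmatrix}.$$ *)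

(* Defs.v *)
From HB Require Import structures.
From mathcomp Require Import all_boot all_order all_algebra all_field.
Set Implicit Arguments. Unset Strict Implicit. Unset Printing Implicit Defensive.
Import GRing.Theory.
Local Open Scope ring_scope.

(* Encoding:
   F_q = a finite field F, A = {poly F} (variable theta).
   u := 1/theta.  All quantities a^{-n} sigma(a) (a monic) live in
   F[[u]][[t_1..t_s]] subset K_infty[[t_1..t_s]];  a series is
   represented by its coefficient function  m k |-> [t^m u^k].
   The absolute value is |c| = q^{-(u-adic valuation of c)}. *)

Section MZV.
Variable F : finFieldType.
Variable s : nat.

Definition mindex := 'I_s -> nat.
Definition ser := mindex -> nat -> F.

Definition mdeg (m : mindex) : nat := (\sum_(i < s) m i)%N.

Definition ser_one : ser := fun m k => if (mdeg m == 0%N) && (k == 0%N) then 1 else 0.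

Definition ser_mul (f g : ser) : ser := fun m k =>
  \sum_(j : {ffun 'I_s -> 'I_(\max_(i < s) m i).+1} | [forall i, (j i <= m i)%N])
    \sum_(l < k.+1) f (fun i => nat_of_ord (j i)) l * g (fun i => (m i - j i)%N) (k - l)%N.

Definition ser_sum (d : nat) (f : nat -> ser) : ser := fun m k => \sum_(i < d) f i m k.

Fixpoint inv_upto (c : nat -> F) (k : nat) : seq F :=
  match k with
  | 0 => [:: (c 0%N)^-1]
  | k'.+1 => let l := inv_upto c k' in
      rcons l (- (c 0%N)^-1 * \sum_(i < k'.+1) c i.+1 * nth 0 l (k' - i)%N)
  end.
Definition psinv (c : nat -> F) (k : nat) : F := nth 0 (inv_upto c k) k.

(* the monic polynomial theta^d + sum_{i<d} c_i theta^i; c ranges over a set in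
   bijection with A^+(d) *)
Definition monic_of (d : nat) (c : {ffun 'I_d -> F}) : {poly F} :=
  'X^d + \poly_(i < d) (if @insub _ (fun x => (x < d)%N) 'I_d i is Some j then c j else 0).

(* [u^k] of a^{-n} in K_infty, for a monic of degree d:
   a^{-n} = u^{nd} / rev(a^n)(u), rev(p)(u) = u^{deg p} p(1/u). *)
Definition inv_pow (d : nat) (a : {poly F}) (n k : nat) : F :=
  let D := (n * d)%N in
  if (D <= k)%N then
    psinv (fun i => if (i <= D)%N then (a ^+ n)`_(D - i) else 0) (k - D)%N
  else 0.

(* sigma = prod_i chi_{t_i}^{e_i}; sigma(a) = prod_i a(t_i)^{e_i}.
   S_d(n; sigma) = sum_{a in A^+(d)} a^{-n} sigma(a). *)
Definition Sd (d : nat) (p : nat * mindex) : ser := fun m k =>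
  \sum_(c : {ffun 'I_d -> F})
     (\prod_(i < s) ((monic_of c) ^+ (p.2 i))`_(m i)) * inv_pow d (monic_of c) p.1 k.

(* S_d ( sigma_1 ... sigma_r ; n_1 ... n_r ), the data being the nonempty list
   (n_1,sigma_1) :: [(n_2,sigma_2); ...; (n_r,sigma_r)] *)
Fixpoint Sm (p : nat * mindex) (ps : seq (nat * mindex)) (d : nat) : ser :=
  match ps with
  | [::] => Sd d p
  | p' :: ps' => ser_mul (Sd d p) (ser_sum d (fun i => Sm p' ps' i))
  end.

(* z is the Gauss-norm limit of the partial sums sum_{d<D} S_d(...) *)
Definition is_zeta (p : nat * mindex) (ps : seq (nat * mindex)) (z : ser) : Prop :=
  forall B : nat, exists D0 : nat, forall D : nat, (D0 <= D)%N ->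
    forall (m : mindex) (k : nat), (k < B)%N -> z m k = ser_sum D (Sm p ps) m k.

(* membership in T_s: coefficients tend to 0 *)
Definition in_Tate (z : ser) : Prop :=
  forall B : nat, exists M : nat, forall m : mindex, (M <= mdeg m)%N ->
    forall k : nat, (k < B)%N -> z m k = 0.

(* entire: |c_m| q^{N |m|} -> 0 for every N, i.e. the series converges on all
   of C_infty^s *)
Definition entire (z : ser) : Prop :=
  forall N B : nat, exists M : nat, forall m : mindex, (M <= mdeg m)%N ->
    forall k : nat, (k < N * mdeg m + B)%N -> z m k = 0.

End MZV.

(* Main.v *)
Require Import Defs.
From HB Require Import structures.
From mathcomp Require Import all_boot all_order all_algebra all_field all_fingroup all_solvable.
From mathcomp Require Import zify.
Set Implicit Arguments. Unset Strict Implicit. Unset Printing Implicit Defensive.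
Import GRing.Theory.
Local Open Scope ring_scope.

Section Pdeg.
Variable F : finFieldType.
Variable d : nat.
Local Notation V := {ffun 'I_d -> F}.

Definition mono (al : {ffun 'I_d -> nat}) (c : V) : F := \prod_i c i ^+ al i.

Definition pdeg (D : nat) (f : V -> F) : Prop :=
  exists l : seq (F * {ffun 'I_d -> nat}),
    all (fun x : F * {ffun 'I_d -> nat} => (\sum_i x.2 i <= D)%N) l /\
    forall c, f c = \sum_(x <- l) x.1 * mono x.2 c.

Lemma pdeg_ext D f g : (forall c, f c = g c) -> pdeg D f -> pdeg D g.
Proof. by move=> e [l [h1 h2]]; exists l; split=> // c; rewrite -e. Qed.

Lemma pdeg_le D D' f : (D <= D')%N -> pdeg D f -> pdeg D' f.
Proof.
move=> le [l [h1 h2]]; exists l; split=> //.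
by apply/allP=> x /(allP h1) /= h; apply: leq_trans h le.
Qed.

Lemma pdeg_mono D (a : F) (al : {ffun 'I_d -> nat}) : (\sum_i al i <= D)%N -> pdeg D (fun c => a * mono al c).
Proof. by move=> h; exists [:: (a, al)]; split; rewrite /= ?h // => c; rewrite big_seq1. Qed.

Lemma pdeg0 D : pdeg D (fun _ => 0).
Proof. by exists [::]; split=> // c; rewrite big_nil. Qed.

Lemma pdegD D f g : pdeg D f -> pdeg D g -> pdeg D (fun c => f c + g c).
Proof.
move=> [l1 [a1 e1]] [l2 [a2 e2]]; exists (l1 ++ l2); split.
  by rewrite all_cat a1 a2.
by move=> c; rewrite big_cat e1 e2.
Qed.

Lemma pdeg_sum D (T : eqType) (r : seq T) (G : T -> V -> F) :
  (forall x, x \in r -> pdeg D (G x)) -> pdeg D (fun c => \sum_(x <- r) G x c).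
Proof.
elim: r => [|x r IH] h.
  by apply: pdeg_ext (pdeg0 D) => c; rewrite big_nil.
have h2 : forall y, y \in r -> pdeg D (G y).
  by move=> y hy; apply: h; rewrite inE hy orbT.
apply: pdeg_ext (pdegD (h x (mem_head _ _)) (IH h2)) => c.
by rewrite big_cons.
Qed.

Lemma pdeg_sumA D (T : finType) (P : pred T) (G : T -> V -> F) :
  (forall x, pdeg D (G x)) -> pdeg D (fun c => \sum_(x | P x) G x c).
Proof.
move=> h.
have h2 : forall x, x \in enum T -> pdeg D (fun c => if P x then G x c else 0).
  move=> x _; case: (P x); [exact: h | exact: pdeg0].
apply: pdeg_ext (pdeg_sum h2) => c.
by rewrite [RHS]big_mkcond /= big_enum.
Qed.

Lemma mono_add (al be : {ffun 'I_d -> nat}) c :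
  mono [ffun i => (al i + be i)%N] c = mono al c * mono be c.
Proof. by rewrite /mono -big_split; apply: eq_bigr => i _; rewrite ffunE exprD. Qed.

Lemma pdegM D1 D2 f g : pdeg D1 f -> pdeg D2 g -> pdeg (D1 + D2) (fun c => f c * g c).
Proof.
move=> [l1 [a1 e1]] [l2 [a2 e2]].
have H : forall x, x \in l1 -> pdeg (D1 + D2) (fun c => \sum_(y <- l2)
   (x.1 * y.1) * mono [ffun i => (x.2 i + y.2 i)%N] c).
  move=> x hx; apply: pdeg_sum => y hy; apply: pdeg_mono.
  have := allP a1 x hx; have := allP a2 y hy => /= h2 h1.
  rewrite (eq_bigr (fun i => (x.2 i + y.2 i)%N)); last by move=> i _; rewrite ffunE.
  by rewrite big_split /= leq_add.
apply: pdeg_ext (pdeg_sum H) => c.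
rewrite e1 e2 mulr_suml; apply: eq_bigr => x _.
rewrite mulr_sumr; apply: eq_bigr => y _; rewrite mono_add.
by rewrite mulrACA.
Qed.

Lemma pdeg_const D a : pdeg D (fun _ => a).
Proof.
have H : (\sum_i ([ffun=> 0%N] : {ffun 'I_d -> nat}) i <= D)%N.
  by rewrite big1 // => i _; rewrite ffunE.
apply: pdeg_ext (pdeg_mono a H) => c.
by rewrite /mono big1 ?mulr1 // => i _; rewrite ffunE expr0.
Qed.

Lemma pdeg_var D i : (1 <= D)%N -> pdeg D (fun c => c i).
Proof.
move=> hD.
have H : (\sum_j ([ffun j => nat_of_bool (j == i)] : {ffun 'I_d -> nat}) j <= D)%N.
  rewrite (bigD1 i) //= big1 ?ffunE ?eqxx //.
  by move=> j /negbTE hj; rewrite ffunE hj.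
apply: pdeg_ext (pdeg_mono 1 H) => c.
rewrite mul1r /mono (bigD1 i) //= big1 ?ffunE ?eqxx ?mulr1 //.
by move=> j /negbTE hj; rewrite ffunE hj expr0.
Qed.

Lemma pdeg_prod (T : eqType) (r : seq T) (e : T -> nat) (G : T -> V -> F) :
  (forall x, pdeg (e x) (G x)) ->
  pdeg (\sum_(x <- r) e x) (fun c => \prod_(x <- r) G x c).
Proof.
move=> h; elim: r => [|x r IH].
  by apply: pdeg_ext (pdeg_const _ 1) => c; rewrite big_nil.
apply: pdeg_ext (pdeg_le _ (pdegM (h x) IH)) => [c|]; by rewrite !big_cons.
Qed.

End Pdeg.
Section Vanish.
Variable F : finFieldType.

Lemma card_natr0 : (#|F|%:R : F) = 0.
Proof.
have [p pr ch] := finPcharP F.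
have pg : p.-nat #|F|.
  by have := abelem_pgroup (fin_ring_pchar_abelem ch); rewrite /pgroup cardsT.
have [e he] := p_natP pg.
have e0 : (0 < e)%N.
  case: e he => // he; have := finNzRing_gt1 F; by rewrite he expn0.
by rewrite he natrX (pcharf0 ch) expr0n gtn_eqF.
Qed.

Lemma sum_pow_small a : (a < #|F|.-1)%N -> \sum_(y : F) y ^+ a = 0.
Proof.
move=> ha; case: (posnP a) => [->|a0].
  under eq_bigr do rewrite expr0.
  by rewrite sumr_const card_natr0 // mul0rn.
case: (boolP [exists y : F, (y != 0) && (y ^+ a != 1)]) => [/existsP [g /andP [g0 ga]]|H].
  have e : \sum_(y : F) y ^+ a = g ^+ a * \sum_(y : F) y ^+ a.
    rewrite [LHS](reindex_inj (mulfI g0)) /= mulr_sumr.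
    by apply: eq_bigr => y _; rewrite exprMn.
  apply/eqP; move: e => /eqP; rewrite -subr_eq0 -[X in X - _](mul1r) -mulrBl mulf_eq0.
  by rewrite subr_eq0 eq_sym (negbTE ga).
exfalso.
have : (size (enum (predC1 (0%R : F))) <= a)%N.
  apply: max_unity_roots => //; last exact: enum_uniq.
  apply/allP => y; rewrite mem_enum /= => y0; rewrite unity_rootE; have y0' : y != 0 by exact: y0.
  apply/negPn; apply: contra H => hy; apply/existsP; exists y; by rewrite y0' hy.
by rewrite -cardE cardC1 leqNgt ha.
Qed.

Variable d : nat.
Local Notation V := {ffun 'I_d -> F}.

Lemma pdeg_sum_vanish D f : pdeg D f -> (D < d * #|F|.-1)%N -> \sum_(c : V) f c = 0.
Proof.
move=> [l [hl ef]] hD.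
under eq_bigr do rewrite ef.
rewrite exchange_big /= big1_seq // => x /andP [_ hx].
rewrite -mulr_sumr /mono.
rewrite -(bigA_distr_bigA (fun i (y : F) => y ^+ x.2 i)) /=.
have [i hi] : exists i, (x.2 i < #|F|.-1)%N.
  case: (boolP [exists i, (x.2 i < #|F|.-1)%N]) => [/existsP [i hi]|H]; first by exists i.
  exfalso; have := allP hl x hx => /= hs.
  have : (d * #|F|.-1 <= \sum_i x.2 i)%N.
    rewrite -[X in (X * _)%N]card_ord -sum_nat_const; apply: leq_sum => i _.
    by move: H; rewrite negb_exists => /forallP /(_ i); rewrite -leqNgt.
  by move=> h; have := leq_ltn_trans (leq_trans h hs) hD; rewrite ltnn.
by rewrite (bigD1 i) //= sum_pow_small // mul0r mulr0.
Qed.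

End Vanish.
Section Fam.
Variable F : finFieldType.
Local Notation q := #|F|.

Lemma q_gt1 : (1 < q)%N. Proof. exact: finNzRing_gt1. Qed.

Lemma frobP (R : {poly F}) : R ^+ q = R \Po 'X^q.
Proof.
have [p pr ch] := finPcharP F.
have pg : p.-nat q.
  by have := abelem_pgroup (fin_ring_pchar_abelem ch); rewrite /pgroup cardsT.
have hc : ([char {poly F}]%R).-nat q.
  by rewrite (eq_pnat _ (fun x => etrans (pchar_poly F x) (pcharf_eq ch x))).
elim/poly_ind: R => [|R c IH].
  by rewrite expr0n gtn_eqF ?comp_poly0 // ltnW // q_gt1.
rewrite exprDn_pchar // exprMn IH -rmorphXn /= expf_card.
by rewrite comp_polyD comp_polyM comp_polyX comp_polyC.
Qed.

Lemma coef_frob (R : {poly F}) r :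
  (R ^+ q)`_r = if (q %| r)%N then R`_(r %/ q) else 0.
Proof. by rewrite frobP coef_comp_poly_Xn // ltnW // q_gt1. Qed.

Variable d : nat.
Local Notation V := {ffun 'I_d -> F}.

Definition cdeg D (G : V -> {poly F}) := forall r, pdeg D (fun c => (G c)`_r).

Lemma cdeg_le D D' G : (D <= D')%N -> cdeg D G -> cdeg D' G.
Proof. by move=> h hG r; apply: pdeg_le h (hG r). Qed.

Lemma cdegM D1 D2 G1 G2 : cdeg D1 G1 -> cdeg D2 G2 ->
  cdeg (D1 + D2) (fun c => G1 c * G2 c).
Proof.
move=> h1 h2 r.
have H : forall j : 'I_r.+1, pdeg (D1 + D2) (fun c => (G1 c)`_j * (G2 c)`_(r - j)).
  by move=> j; apply: pdegM.
by apply: pdeg_ext (pdeg_sumA xpredT H) => c; rewrite coefM.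
Qed.

Lemma cdeg_const D (a : {poly F}) : cdeg D (fun _ => a).
Proof. by move=> r; apply: pdeg_const. Qed.

Lemma cdegX D G e : cdeg D G -> cdeg (D * e) (fun c => G c ^+ e).
Proof.
move=> h; elim: e => [|e IH].
  by apply: cdeg_le (cdeg_const 0 1) => //; rewrite muln0.
have := cdegM h IH; rewrite -mulnS => H r.
by apply: pdeg_ext (H r) => c; rewrite exprS.
Qed.

Lemma cdeg_frob D G : cdeg D G -> cdeg D (fun c => G c ^+ q).
Proof.
move=> h r; case: (boolP (q %| r)%N) => hr.
  by apply: pdeg_ext (h (r %/ q)%N) => c; rewrite coef_frob hr.
by apply: pdeg_ext (pdeg0 F d D) => c; rewrite coef_frob (negbTE hr).
Qed.

Lemma key_pow P : cdeg 1 P -> forall L M, (M < q ^ L)%N ->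
  cdeg (q.-1 * L) (fun c => P c ^+ M).
Proof.
move=> hP; elim=> [|L IH] M hM.
  move: hM; rewrite expn0 ltnS leqn0 => /eqP ->.
  by apply: cdeg_const.
have hq := q_gt1.
have q0 : (0 < q)%N by exact: ltnW hq.
have e : forall c, P c ^+ M = P c ^+ (M %% q) * (P c ^+ (M %/ q)) ^+ q.
  by move=> c; rewrite -exprM -exprD addnC -divn_eq.
have h1 : cdeg (q.-1) (fun c => P c ^+ (M %% q)).
  by apply: cdeg_le (cdegX (M %% q) hP); rewrite mul1n -ltnS prednK // ltn_pmod.
have h2 : cdeg (q.-1 * L) (fun c => (P c ^+ (M %/ q)) ^+ q).
  apply: cdeg_frob; apply: IH; rewrite ltn_divLR //.
  by rewrite mulnC -expnS.
have := cdegM h1 h2; rewrite -mulnS => H r.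
by apply: pdeg_ext (H r) => c; rewrite e.
Qed.

Lemma cdeg_monic : cdeg 1 (@monic_of F d).
Proof.
move=> r; rewrite /monic_of.
have H : forall j : 'I_d, pdeg 1 (fun c : V => (j == r :> nat)%:R * c j).
  move=> j; rewrite -(add0n 1%N); apply: pdegM; [exact: pdeg_const | exact: pdeg_var].
apply: pdeg_ext (pdegD (pdeg_const d 1 (('X^d : {poly F})`_r)) (pdeg_sumA xpredT H)) => c.
  rewrite coefD; congr (_ + _); rewrite coef_poly.
  case: ltnP => hr.
    rewrite insubT /= (bigD1 (Ordinal hr)) //= eqxx mul1r big1 ?addr0 //.
    by move=> j hj; rewrite -(inj_eq val_inj) /= in hj; rewrite (negbTE hj) mul0r.
  rewrite big1 // => j _; have : (j < r)%N by apply: leq_trans (ltn_ord j) hr.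
  by rewrite ltn_neqAle => /andP [/negbTE -> _]; rewrite mul0r.
Qed.

Definition revd (N : nat) (p : {poly F}) : {poly F} := \sum_(i < N.+1) p`_i *: 'X^(N - i).

Lemma cdeg_revd D N G : cdeg D G -> cdeg D (fun c => revd N (G c)).
Proof.
move=> h r.
have H : forall i : 'I_N.+1, pdeg D (fun c => (G c)`_i * ('X^(N - i))`_r).
  by move=> i; rewrite -(addn0 D); apply: pdegM => //; apply: pdeg_const.
apply: pdeg_ext (pdeg_sumA xpredT H) => c.
by rewrite /revd coef_sum; apply: eq_bigr => i _; rewrite coefZ.
Qed.

End Fam.
Section Rev.
Variable F : finFieldType.
Local Notation q := #|F|.

Lemma revd0 N : revd N (0 : {poly F}) = 0.
Proof. by rewrite /revd big1 // => i _; rewrite coef0 scale0r. Qed.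

Lemma revdD N (p r : {poly F}) : revd N (p + r) = revd N p + revd N r.
Proof. by rewrite /revd -big_split; apply: eq_bigr => i _; rewrite coefD scalerDl. Qed.

Lemma revdZ N a (p : {poly F}) : revd N (a *: p) = a *: revd N p.
Proof. by rewrite /revd scaler_sumr; apply: eq_bigr => i _; rewrite coefZ scalerA. Qed.

Lemma revd_sum N (I : finType) (G : I -> {poly F}) :
  revd N (\sum_i G i) = \sum_i revd N (G i).
Proof. exact: (big_morph (revd N) (revdD N) (revd0 N)). Qed.

Lemma revdXn N k : (k <= N)%N -> revd N ('X^k : {poly F}) = 'X^(N - k).
Proof.
move=> hk; rewrite /revd (bigD1 (Ordinal (hk : (k < N.+1)%N))) //= coefXn eqxx scale1r.
rewrite big1 ?addr0 // => i hi; rewrite coefXn.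
have -> : (i == k :> nat) = false.
  by apply/negbTE; move: hi; apply: contra => /eqP h; apply/eqP/val_inj.
by rewrite scale0r.
Qed.

Lemma poly_expand N (p : {poly F}) : (size p <= N.+1)%N ->
  p = \sum_(i < N.+1) p`_i *: 'X^i.
Proof.
move=> hp; rewrite -poly_def; apply/polyP => i; rewrite coef_poly.
by case: ltnP => // h; rewrite nth_default // (leq_trans hp h).
Qed.

Lemma revdM d e (a b : {poly F}) : (size a <= d.+1)%N -> (size b <= e.+1)%N ->
  revd (d + e) (a * b) = revd d a * revd e b.
Proof.
move=> ha hb; rewrite {1}(poly_expand ha) {1}(poly_expand hb) mulr_suml revd_sum.
rewrite /revd [in RHS]mulr_suml; apply: eq_bigr => i _.
rewrite mulr_sumr -/(revd _ _) revd_sum mulr_sumr; apply: eq_bigr => j _.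
rewrite -scalerAl -scalerAr scalerA -exprD revdZ revdXn; last first.
  by have := ltn_ord i; have := ltn_ord j; lia.
rewrite -scalerAl -scalerAr scalerA -exprD; congr (_ *: 'X^_).
by have := ltn_ord i; have := ltn_ord j; lia.
Qed.

Lemma revdX d (a : {poly F}) n : (size a <= d.+1)%N ->
  (revd d a) ^+ n = revd (n * d) (a ^+ n).
Proof.
move=> ha; elim: n => [|n IH].
  by rewrite expr0 mul0n /revd big_ord1 coef1 eqxx scale1r.
rewrite [LHS]exprS IH mulSn -revdM ?exprS //.
apply: leq_trans (size_poly_exp_leq _ _) _.
have h : ((size a).-1 <= d)%N by move: ha; case: (size a).
by rewrite ltnS mulnC leq_mul2l h orbT.
Qed.

Lemma coef_revd N (p : {poly F}) i :
  (revd N p)`_i = if (i <= N)%N then p`_(N - i) else 0.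
Proof.
rewrite /revd coef_sum.
under eq_bigr do rewrite coefZ coefXn.
case: ifP => hi.
  have hk : (N - i < N.+1)%N by rewrite ltnS leq_subr.
  rewrite (bigD1 (Ordinal hk)) //= subKn // eqxx mulr1 big1 ?addr0 // => j hj.
  have -> : (i == N - j)%N = false.
    apply/negbTE; move: hj; apply: contra => /eqP h; apply/eqP/val_inj => /=.
    by have := ltn_ord j; lia.
  by rewrite mulr0.
rewrite big1 // => j _; have -> : (i == N - j)%N = false.
  by apply/negbTE; apply: contraFN hi => /eqP ->; rewrite leq_subr.
by rewrite mulr0.
Qed.

Lemma size_inv_upto (c : nat -> F) k : size (inv_upto c k) = k.+1.
Proof. by elim: k => //= k IH; rewrite size_rcons IH. Qed.

Lemma nth_inv_upto (c : nat -> F) k j : (j <= k)%N -> nth 0 (inv_upto c k) j = psinv c j.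
Proof.
elim: k => [|k IH]; first by rewrite leqn0 => /eqP ->.
rewrite leq_eqVlt => /orP [/eqP ->|hj]; first by [].
by rewrite /= nth_rcons size_inv_upto hj IH.
Qed.

Lemma psinvS (c : nat -> F) k :
  psinv c k.+1 = - (c 0%N)^-1 * \sum_(i < k.+1) c i.+1 * psinv c (k - i).
Proof.
rewrite /psinv /= nth_rcons size_inv_upto ltnn eqxx.
congr (_ * _); apply: eq_bigr => i _; rewrite nth_inv_upto //.
by rewrite leq_subr.
Qed.

Lemma psinv_uniq (c : nat -> F) (Y : nat -> F) R : c 0%N = 1 ->
  (forall r, (r < R)%N -> \sum_(i < r.+1) c i * Y (r - i)%N = (r == 0%N)%:R) ->
  forall r, (r < R)%N -> psinv c r = Y r.
Proof.
move=> c0 hY; elim/ltn_ind => r IH hR.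
case: r IH hR => [|k] IH hR.
  have := hY 0%N hR; rewrite big_ord1 c0 mul1r subn0 /= => ->.
  by rewrite /psinv /= c0 invr1.
rewrite psinvS c0 invr1 mulN1r.
have := hY k.+1 hR; rewrite big_ord_recl /= c0 mul1r subn0 => /eqP.
rewrite addr_eq0 => /eqP ->; congr (- _); apply: eq_bigr => i _.
rewrite /bump /= add1n subSS IH //; first by rewrite ltnS leq_subr.
by apply: leq_ltn_trans (leq_subr _ _) (ltnW hR).
Qed.

End Rev.
Section SdSec.
Variable F : finFieldType.
Local Notation q := #|F|.

Lemma sum_nz (I : finType) (P : pred I) (G : I -> F) :
  \sum_(i | P i) G i != 0 -> exists i, P i /\ G i != 0.
Proof.
move=> hs; case: (boolP [exists i, P i && (G i != 0)]) => [/existsP [i /andP [h1 h2]]|H].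
  by exists i.
exfalso; move/negP: hs; apply; apply/eqP; apply: big1 => i Pi.
apply/eqP; apply: contraNT H => Hi; apply/existsP; exists i; by rewrite Pi Hi.
Qed.

Lemma size_monic d (c : {ffun 'I_d -> F}) : size (monic_of c) = d.+1.
Proof.
rewrite /monic_of size_polyDl ?size_polyXn // ltnS.
exact: size_poly.
Qed.

Lemma monic_lead d (c : {ffun 'I_d -> F}) : (monic_of c)`_d = 1.
Proof. by rewrite /monic_of coefD coefXn eqxx coef_poly ltnn addr0. Qed.

Definition Pr d (c : {ffun 'I_d -> F}) := revd d (monic_of c).

Lemma Pr0 d (c : {ffun 'I_d -> F}) : (Pr c)`_0 = 1.
Proof. by rewrite /Pr coef_revd leq0n subn0 monic_lead. Qed.

Lemma cdeg_Pr d : cdeg 1 (@Pr d).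
Proof. exact: cdeg_revd (cdeg_monic F d). Qed.

Lemma coef0X (p : {poly F}) n : (p ^+ n)`_0 = p`_0 ^+ n.
Proof. by elim: n => [|n IH]; rewrite ?expr0 ?coef1 // !exprS coef0M IH. Qed.

Lemma pow_qpow (P : {poly F}) : P`_0 = 1 -> forall L r, (r < q ^ L)%N ->
  (P ^+ (q ^ L))`_r = (r == 0%N)%:R.
Proof.
move=> P0; have hq := q_gt1 F; have q0 : (0 < q)%N by exact: ltnW.
elim=> [|L IH] r hr.
  by move: hr; rewrite expn0 ltnS leqn0 => /eqP ->; rewrite expr1 P0.
rewrite expnSr exprM coef_frob.
case: ifP => hd.
  rewrite IH; last by rewrite ltn_divLR // -expnSr.
  case: (posnP r) => [->|r0]; first by rewrite div0n.
  have : (0 < r %/ q)%N by rewrite divn_gt0 // dvdn_leq.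
  by rewrite lt0n => /negbTE ->.
by case: (posnP r) hd => [->|r0]; rewrite ?dvdn0 // gtn_eqF.
Qed.

Lemma inv_pow_eq d (c : {ffun 'I_d -> F}) n k L : (n <= q ^ L)%N -> (n * d <= k)%N ->
  (k - n * d < q ^ L)%N ->
  inv_pow d (monic_of c) n k = ((Pr c) ^+ (q ^ L - n))`_(k - n * d).
Proof.
move=> hn hk hr; rewrite /inv_pow hk.
have Qeq : forall i, (if (i <= n * d)%N then ((monic_of c) ^+ n)`_(n * d - i) else 0)
   = ((Pr c) ^+ n)`_i.
  by move=> i; rewrite /Pr revdX ?size_monic // coef_revd.
apply: (psinv_uniq (R := (q ^ L)%N)) => //.
  by rewrite (Qeq 0%N) coef0X Pr0 expr1n.
move=> r hrr; under eq_bigr do rewrite Qeq.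
by rewrite -coefM -exprD subnKC // pow_qpow // Pr0.
Qed.

Variable s : nat.

Definition wt (p : nat * mindex s) : nat := (\sum_i p.2 i)%N.

Lemma Sd_vanish d (p : nat * mindex s) m k L : (1 <= p.1)%N -> (p.1 <= q ^ L)%N ->
  (k - p.1 * d < q ^ L)%N -> (wt p + q.-1 * L < d * q.-1)%N -> Sd F d p m k = 0.
Proof.
move=> h1 hn hr hw; case: (leqP (p.1 * d) k) => hk; last first.
  by apply: big1 => c _; rewrite /inv_pow leqNgt hk /= mulr0.
rewrite /Sd; under eq_bigr do rewrite (inv_pow_eq _ hn hk hr).
apply: (pdeg_sum_vanish (D := (wt p + q.-1 * L)%N)) => //.
apply: pdegM.
  apply: pdeg_prod => i; have := cdegX (p.2 i) (cdeg_monic F d).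
  by rewrite mul1n => /(_ (m i)).
have hM : (q ^ L - p.1 < q ^ L)%N.
  by rewrite -subn_gt0 subKn // (leq_trans h1 hn).
exact: (key_pow (cdeg_Pr d) hM (k - p.1 * d)%N).
Qed.

Lemma Sd_udeg d (p : nat * mindex s) m k : Sd F d p m k != 0 -> (p.1 * d <= k)%N.
Proof.
apply: contraR; rewrite -ltnNge => hk; apply/eqP.
by apply: big1 => c _; rewrite /inv_pow leqNgt hk /= mulr0.
Qed.

Lemma Sd_tdeg d (p : nat * mindex s) m k : Sd F d p m k != 0 -> (mdeg m <= d * wt p)%N.
Proof.
move=> /sum_nz [c [_]]; rewrite mulf_eq0 negb_or => /andP [/prodf_neq0 h _].
rewrite /mdeg /wt big_distrr /=; apply: leq_sum => i _.
have := h i isT; apply: contraR; rewrite -ltnNge => hm.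
rewrite nth_default //; apply: leq_trans (size_poly_exp_leq _ _) _.
by rewrite size_monic.
Qed.

End SdSec.
Section SmSec.
Variable F : finFieldType.
Local Notation q := #|F|.
Variable s : nat.

Lemma ser_mul_nz (f g : ser F s) m k : ser_mul f g m k != 0 ->
  exists (j : mindex s) (l : nat), (l <= k)%N /\ (forall i, j i <= m i)%N /\
    f j l != 0 /\ g (fun i => m i - j i)%N (k - l)%N != 0.
Proof.
move=> /sum_nz [j [/forallP hj]] /sum_nz [l [_]].
rewrite mulf_eq0 negb_or => /andP [h1 h2].
exists (fun i => nat_of_ord (j i)), l; split; first by rewrite -ltnS ltn_ord.
by split.
Qed.

Lemma mdeg_split (j m : mindex s) : (forall i, j i <= m i)%N ->
  mdeg m = (mdeg j + mdeg (fun i => m i - j i))%N.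
Proof. by move=> h; rewrite /mdeg -big_split; apply: eq_bigr => i _ /=; rewrite subnKC. Qed.

Definition Wt (l : seq (nat * mindex s)) : nat := (\sum_(x <- l) wt x)%N.

Lemma Sm_head (p : nat * mindex s) ps d (m : mindex s) k : Sm F p ps d m k != 0 ->
  exists (j : mindex s) l, (l <= k)%N /\ Sd F d p j l != 0.
Proof.
case: ps => [|p' ps] /= h; first by exists m, k.
by have [j [l [hl [_ [h1 _]]]]] := ser_mul_nz h; exists j, l.
Qed.

Lemma Sm_tdeg (ps : seq (nat * mindex s)) : forall (p : nat * mindex s) d (m : mindex s) k, Sm F p ps d m k != 0 -> (mdeg m <= d * Wt (p :: ps))%N.
Proof.
elim: ps => [|p' ps IH] p d m k.
  by move=> /= /Sd_tdeg; rewrite /Wt big_cons big_nil addn0.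
move=> /= /ser_mul_nz [j [l [hl [hj [h1 h2]]]]].
move: h2 => /sum_nz [i [_ hi]].
have A := IH _ _ _ _ hi; have B := Sd_tdeg h1.
rewrite (mdeg_split hj) /Wt big_cons mulnDr leq_add //.
apply: leq_trans A _; rewrite leq_mul2r ltnW ?orbT //.
Qed.

Lemma Sm_udeg (p : nat * mindex s) ps d (m : mindex s) k : (1 <= p.1)%N -> Sm F p ps d m k != 0 -> (d <= k)%N.
Proof.
move=> h1 /Sm_head [j [l [hl /Sd_udeg h]]].
apply: leq_trans hl; apply: leq_trans h; by rewrite leq_pmull.
Qed.

Lemma two_pow L : (2 ^ L <= q ^ L)%N.
Proof. by case: L => [|L] //; rewrite leq_exp2r // q_gt1. Qed.

Lemma Sm_big (p : nat * mindex s) ps d (m : mindex s) k : (1 <= p.1)%N -> (wt p + p.1 < d)%N ->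
  Sm F p ps d m k != 0 -> (2 ^ (d - wt p - 1) <= k)%N.
Proof.
move=> h1 hd /Sm_head [j [l [hl h]]]; apply: leq_trans hl.
rewrite leqNgt; apply/negP => hlt; move/negP: h; apply; apply/eqP.
set L := (d - wt p - 1)%N.
have hq := q_gt1 F.
have h2 := two_pow L.
apply: (@Sd_vanish F s d p j l L) => //.
- apply: leq_trans h2; apply: ltnW; apply: leq_trans (ltn_expl _ (isT : (1 < 2)%N)) _.
  by rewrite leq_exp2l //; rewrite /L; lia.
- by apply: leq_ltn_trans (leq_subr _ _) (leq_trans hlt h2).
- have : (1 <= q.-1)%N by rewrite -ltnS prednK // ltnW.
  have : d = (L + wt p + 1)%N by rewrite /L; lia.
  move: (q.-1) => Q -> hQ; nia.
Qed.

End SmSec.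
Lemma growth a b c : exists I0, forall i, (I0 <= i)%N -> (a * i + b <= 2 ^ (i - c))%N.
Proof.
set K := (2 * a + a * c + b + 1)%N.
exists (c + 2 * K)%N => i hi.
set j' := (i - c - K)%N.
have hj : (i - c = j' + K)%N by rewrite /j'; lia.
have hi' : (i = j' + K + c)%N by rewrite /j'; lia.
have hjK : (K <= j')%N by rewrite /j'; lia.
rewrite hj expnD.
have X := ltn_expl j' (isT : (1 < 2)%N).
have Y := ltn_expl K (isT : (1 < 2)%N).
move: (2 ^ j')%N (2 ^ K)%N X Y => x y X Y.
rewrite hi'.
have hK : K = (2 * a + a * c + b + 1)%N by [].
clearbody K j'; nia.
Qed.

Theorem proposition1 (F : finFieldType) (s : nat) (hs : (1 <= s)%N)
  (p : nat * mindex s) (ps : seq (nat * mindex s))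
  (hn : all (fun x => (1 <= x.1)%N) (p :: ps)) :
  exists z : ser F s, is_zeta p ps z /\ in_Tate z /\ entire z.
Proof.
move: hn => /= /andP [h1 _].
pose z : ser F s := fun m k => ser_sum k.+1 (Sm F p ps) m k.
have tail : forall D m k, (k < D)%N -> ser_sum D (Sm F p ps) m k = z m k.
  move=> D m k hk; rewrite /z /ser_sum (big_ord_widen D (fun i => Sm F p ps i m k) hk).
  rewrite [LHS](bigID (fun i : 'I_D => (i < k.+1)%N)) /= [X in _ + X]big1 ?addr0 //.
  move=> i hi; case: (eqVneq (Sm F p ps i m k) 0) => // /(Sm_udeg h1) H.
  by rewrite ltnS H in hi.
have nz : forall m k, z m k != 0 -> exists i, (i <= k)%N /\
    (mdeg m <= i * Wt (p :: ps))%N /\ ((wt p + p.1 < i)%N -> (2 ^ (i - wt p - 1) <= k)%N).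
  move=> m k /sum_nz [i [_ hi]]; exists i; split; first exact: Sm_udeg h1 hi.
  split; first exact: Sm_tdeg hi.
  by move=> hb; exact: Sm_big h1 hb hi.
have ent : entire z.
  move=> N B; set W := Wt (p :: ps).
  have [I0 hI] := growth (N * W) B (wt p + 1).
  set T := (I0 + wt p + p.1 + 1)%N.
  exists (T * W + 1)%N => m hm k hk.
  case: (eqVneq (z m k) 0) => // /nz [i [hik [hmi hbig]]].
  exfalso.
  have hTi : (T < i)%N by nia.
  have hb : (wt p + p.1 < i)%N by rewrite /T in hTi; lia.
  have H1 := hbig hb.
  have H2 := hI i (ltnW (leq_ltn_trans (leq_trans (leq_addr _ _) (leq_trans (leq_addr _ _) (leq_addr _ _))) hTi)).
  rewrite subnDA in H2.
  nia.
exists z; split; [|split] => //.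
  move=> B; exists B => D hD m k hk; by rewrite tail // (leq_trans hk hD).
move=> B; have [M hM] := ent 0%N B; exists M => m hm k hk.
by apply: hM => //; rewrite mul0n add0n.
Qed.
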